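(* Let $\epsilon>0$, $B\in\mathbb{R}$, $s\in\mathbb{N}$, and let $v_1,\dots,v_N\in\mathbb{C}^{2^s}$ be orthonormal vectors such that $QK^{\epsilon}(|v_i\rangle\langle v_i|)\le B$ for all $i\le N$. Then $N\le\epsilon^{-1}2^{B}$.
   Context: Let $\mathbb{U}$ be a fixed universal prefix-free Turing machine. Finite sets of vectors with complex algebraic entries are coded by natural numbers via a fixed canonical effective indexing; $\mathbb{U}(\sigma)\downarrow=F$ means that $\mathbb{U}$ on input $\sigma$ halts and outputs the code of $F$. $\mathbb{C}^{2^n}_{alg}$ denotes the set of vectors in $\mathbb{C}^{2^n}$ all of whose entries are complex algebraic numbers. All logarithms are base 2. For a density matrix $\tau$ on $\mathbb{C}^{2^{n}}$ write $|\tau|=n$. For $\epsilon>0$ define $QK^{\epsilon}(\tau)=\inf\{|\sigma|+\log|F| : \mathbb{U}(\sigma)\downarrow=F,\ F \text{ an orthonormal subset of } \mathbb{C}^{2^{|\tau|}}_{alg},\ \sum_{v\in F}\langle v|\tau|v\rangle>\epsilon\}$, with $\inf\emptyset=\infty$. *)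

(* Defs.v *)
From HB Require Import structures.
From mathcomp Require Import all_boot all_order all_algebra.
From mathcomp Require Import finmap.
From mathcomp Require Import complex.
From mathcomp Require Import all_classical all_reals all_analysis.

Set Implicit Arguments.
Unset Strict Implicit.
Unset Printing Implicit Defensive.

Import Order.TTheory GRing.Theory Num.Theory.
Local Open Scope ring_scope.

Section Defs.
Variable R : realType.
Local Notation C := R[i].

Definition alg_num (z : C) : Prop :=
  exists p : {poly rat}, p != 0 /\ root (map_poly ratr p) z.

Definition vec_of (n : nat) (v : seq C) : 'cV[C]_n := \col_i nth 0 v i.

Definition inner (n : nat) (u w : 'cV[C]_n) : C := \sum_k (u k 0)^* * w k 0.

Definition expect (n : nat) (tau : 'M[C]_n) (v : 'cV[C]_n) : C :=
  \sum_k \sum_l (v k 0)^* * tau k l * v l 0.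

Definition ketbra (n : nat) (v : 'cV[C]_n) : 'M[C]_n :=
  \matrix_(k, l) (v k 0 * (v l 0)^*).

Definition orthonormal_alg (n : nat) (F : {fset seq C}) : Prop :=
  (forall v, v \in F -> size v = (2 ^ n)%N /\ (forall z, z \in v -> alg_num z)) /\
  (forall v w, v \in F -> w \in F ->
     inner (vec_of (2 ^ n) v) (vec_of (2 ^ n) w) = (v == w)%:R).

Definition log2 (x : R) : R := ln x / ln 2.

Definition prefix_free (U : seq bool -> option {fset seq C}) : Prop :=
  forall s t, U s <> None -> U t <> None -> prefix s t -> s = t.

(* QK^eps(tau), for tau a (2^n x 2^n) matrix, so |tau| = n *)
Definition QK (U : seq bool -> option {fset seq C}) (eps : R) (n : nat)
    (tau : 'M[C]_(2 ^ n)) : \bar R :=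
  ereal_inf [set x : \bar R | exists (sigma : seq bool) (F : {fset seq C}),
    [/\ U sigma = Some F, orthonormal_alg n F,
        (eps%:C)%C < \sum_(v <- F) expect tau (vec_of (2 ^ n) v)
      & x = ((size sigma)%:R + log2 (#|` F|)%:R)%:E]].

End Defs.
Arguments QK {R} U eps n tau.

(* Main.v *)
Require Import Defs.
From HB Require Import structures.
From mathcomp Require Import all_boot all_order all_algebra.
From mathcomp Require Import finmap.
From mathcomp Require Import complex.
From mathcomp Require Import all_classical all_reals all_analysis.
Import Order.TTheory GRing.Theory Num.Theory.
Local Open Scope ring_scope.
Definition pfree (S : seq (seq bool)) := {in S &, forall s t, prefix s t -> s = t}.

Lemma kraft_step L b (S : seq (seq bool)) :
  (forall S', uniq S' -> all (fun s => size s <= L)%N S' -> pfree S' ->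
     (\sum_(s <- S') 2 ^ (L - size s) <= 2 ^ L)%N) ->
  uniq S -> [::] \notin S -> pfree S -> all (fun s => size s <= L.+1)%N S ->
  (\sum_(s <- S | head false s == b) 2 ^ (L.+1 - size s) <= 2 ^ L)%N.
Proof.
move=> IH uS nS pS aS.
rewrite -big_filter.
have -> : (\sum_(s <- [seq s <- S | head false s == b]) 2 ^ (L.+1 - size s) =
   \sum_(s <- [seq s <- S | head false s == b]) 2 ^ (L - size (behead s)))%N.
  apply: eq_big_seq => s; rewrite mem_filter => /andP[_ sS].
  case: s sS => [|x s] sS; first by rewrite sS in nS.
  by rewrite /= subSS.
rewrite -(big_map behead xpredT (fun t => 2 ^ (L - size t))%N).
have inj : {in [seq s <- S | head false s == b] &, injective behead}.
  move=> s t; rewrite !mem_filter => /andP[hs sS] /andP[ht tS].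
  case: s hs sS => [|x s] hs sS; first by rewrite sS in nS.
  case: t ht tS => [|y t] ht tS; first by rewrite tS in nS.
  move=> /= ->; move: hs ht => /= /eqP -> /eqP -> //.
apply: IH.
- by rewrite map_inj_in_uniq // filter_uniq.
- apply/allP => t /mapP[s]; rewrite mem_filter => /andP[_ sS] ->.
  rewrite size_behead; have := allP aS s sS; case: (size s) => //.
- move=> t1 t2 /mapP[s1 +] -> /mapP[s2 + ] ->.
  rewrite !mem_filter => /andP[h1 s1S] /andP[h2 s2S].
  case: s1 h1 s1S => [|x s1] h1 s1S; first by rewrite s1S in nS.
  case: s2 h2 s2S => [|y s2] h2 s2S; first by rewrite s2S in nS.
  move=> /= p12; have : prefix (x :: s1) (y :: s2).
    by rewrite prefix_cons p12 andbT; move: h1 h2 => /= /eqP -> /eqP ->.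
  by move=> /(pS _ _ s1S s2S) [].
Qed.

Lemma kraft L (S : seq (seq bool)) : uniq S -> all (fun s => size s <= L)%N S ->
  pfree S -> (\sum_(s <- S) 2 ^ (L - size s) <= 2 ^ L)%N.
Proof.
elim: L S => [|L IH] S uS aS pS.
  case: S uS aS pS => [|x S] uS aS pS; first by rewrite big_nil.
  have x0 : x = [::] by move: aS => /= /andP[]; rewrite leqn0 => /eqP/size0nil.
  have -> : S = [::].
    case: S uS aS {pS} => [//|y S] /= /andP[+ _] /and3P[_ + _].
    by rewrite x0 inE negb_or leqn0 size_eq0 eq_sym => /andP[/negPf ->].
  by rewrite big_seq1 x0.
have [nS|nS] := boolP ([::] \in S).
  have pe : perm_eq S [:: [::]].
    apply: uniq_perm => // t; rewrite inE; apply/idP/idP.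
    + by move=> tS; apply/eqP; symmetry; apply: pS => //; exact: prefix0s.
    + by move/eqP ->.
  by rewrite (perm_big _ pe) big_seq1 subn0.
rewrite (bigID (fun s => head false s == true)) /=.
rewrite expnS mul2n -addnn leq_add //; first exact: kraft_step.
rewrite (eq_bigl (fun s => head false s == false)); first exact: kraft_step.
by move=> s; case: (head false s).
Qed.
Lemma expect_ketbra (R : realType) n (v u : 'cV[R[i]]_n) :
  expect (ketbra v) u = inner u v * inner v u.
Proof.
rewrite /expect /inner mulr_suml; apply: eq_bigr => k _.
rewrite mulr_sumr; apply: eq_bigr => l _; rewrite mxE.
by rewrite !mulrA [_ * (v l 0)^*]mulrC.
Qed.

Lemma pow2_log2 (R : realType) (y : R) : 0 < y -> 2 `^ (log2 y) = y.
Proof.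
move=> y0; rewrite /powR /log2 pnatr_eq0 /= -mulrA mulVf ?mulr1.
  by rewrite lnK.
by apply/lt0r_neq0/ln_gt0; rewrite ltr1n.
Qed.

Lemma card_bound (R : realType) (k m : nat) (x : R) :
  k%:R + log2 m%:R < x -> m%:R * 2 ^+ k <= 2 `^ x.
Proof.
move=> h; case: m h => [|m] h; first by rewrite mul0r ltW // powR_gt0.
rewrite -(@pow2_log2 R _ (ltr0Sn R m)) -powR_mulrn // -powRD; last first.
  by apply/implyP => _; rewrite pnatr_eq0.
apply: ler_powR; first by rewrite ler1n.
by rewrite addrC ltW.
Qed.
Section Inner.
Variable R : realType.
Local Notation C := R[i].
Variable n : nat.
Implicit Types u w : 'cV[C]_n.

Lemma inner_conj u w : (inner u w)^* = inner w u.
Proof.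
rewrite /inner rmorph_sum; apply: eq_bigr => k _.
by rewrite rmorphM /= conjCK mulrC.
Qed.

Lemma innerBr u w1 w2 : inner u (w1 - w2) = inner u w1 - inner u w2.
Proof. by rewrite /inner -sumrB; apply: eq_bigr => k _; rewrite !mxE mulrBr. Qed.

Lemma innerBl u1 u2 w : inner (u1 - u2) w = inner u1 w - inner u2 w.
Proof. by rewrite /inner -sumrB; apply: eq_bigr => k _; rewrite !mxE rmorphB mulrBl. Qed.

Lemma inner_sumr (I : finType) (P : pred I) (F : I -> 'cV[C]_n) u :
  inner u (\sum_(i | P i) F i) = \sum_(i | P i) inner u (F i).
Proof.
rewrite /inner exchange_big; apply: eq_bigr => k _.
by rewrite summxE mulr_sumr.
Qed.

Lemma inner_suml (I : finType) (P : pred I) (F : I -> 'cV[C]_n) w :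
  inner (\sum_(i | P i) F i) w = \sum_(i | P i) inner (F i) w.
Proof.
rewrite /inner exchange_big; apply: eq_bigr => k _.
by rewrite summxE rmorph_sum mulr_suml.
Qed.

Lemma innerZr u a w : inner u (a *: w) = a * inner u w.
Proof.
by rewrite /inner mulr_sumr; apply: eq_bigr => k _; rewrite mxE mulrCA.
Qed.

Lemma innerZl a u w : inner (a *: u) w = a^* * inner u w.
Proof.
by rewrite /inner mulr_sumr; apply: eq_bigr => k _; rewrite mxE rmorphM mulrA.
Qed.

Lemma inner_ge0 u : 0 <= inner u u.
Proof.
by apply: sumr_ge0 => k _; rewrite mulrC mul_conjC_ge0.
Qed.

Lemma bessel (I : finType) (P : pred I) (v : I -> 'cV[C]_n) w :
  (forall i j, inner (v i) (v j) = (i == j)%:R) ->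
  \sum_(i | P i) inner w (v i) * inner (v i) w <= inner w w.
Proof.
move=> ov.
set c := fun i => inner (v i) w.
set S := \sum_(i | P i) c i *: v i.
have h1 : inner w S = \sum_(i | P i) inner w (v i) * inner (v i) w.
  rewrite /S inner_sumr; apply: eq_bigr => i _; rewrite innerZr mulrC //.
have h2 : inner S w = \sum_(i | P i) inner w (v i) * inner (v i) w.
  rewrite /S inner_suml; apply: eq_bigr => i _.
  by rewrite innerZl /c inner_conj.
have h3 : inner S S = \sum_(i | P i) inner w (v i) * inner (v i) w.
  rewrite /S inner_suml; apply: eq_bigr => i Pi.
  rewrite innerZl inner_sumr /c inner_conj.
  rewrite (bigD1 i) //= big1 ?addr0; first by rewrite innerZr ov eqxx mulr1.
  by move=> j /andP[_ ji]; rewrite innerZr ov eq_sym (negPf ji) mulr0.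
have := inner_ge0 (w - S).
by rewrite innerBl !innerBr h1 h2 h3 subrr subr0 subr_ge0.
Qed.

End Inner.
Theorem mainTheorem7 (R : realType) (U : seq bool -> option {fset seq R[i]})
  (HU : prefix_free U) (eps B : R) (s N : nat)
  (v : 'I_N -> 'cV[R[i]]_(2 ^ s)) :
  0 < eps ->
  (forall i j, inner (v i) (v j) = (i == j)%:R) ->
  (forall i, (QK U eps s (ketbra (v i)) <= B%:E)%E) ->
  N%:R <= eps^-1 * 2 `^ B.
Proof.
move=> eps0 ov hQ.
have main : forall x, B < x -> eps * N%:R <= 2 `^ x.
  move=> x Bx.
  have H : forall i, exists p : seq bool * {fset seq R[i]},
    [/\ U p.1 = Some p.2, orthonormal_alg s p.2,
        (eps%:C)%C < \sum_(w <- p.2) expect (ketbra (v i)) (vec_of (2 ^ s) w)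
      & (size p.1)%:R + log2 (#|` p.2|)%:R < x].
    move=> i.
    have : (QK U eps s (ketbra (v i)) < x%:E)%E.
      by apply: (le_lt_trans (hQ i)); rewrite lte_fin.
    move=> /ereal_inf_lt [y [sg [F [h1 h2 h3 ->]]]]; rewrite lte_fin => h4.
    by exists (sg, F); split.
  have [f hf] := choice H.
  pose sg := fun i => (f i).1.
  pose G := fun σ => odflt fset0 (U σ).
  have hG : forall i, (f i).2 = G (sg i).
    by move=> i; case: (hf i) => h _ _ _; rewrite /G /sg h.
  pose S := undup [seq sg i | i <- enum 'I_N].
  have sgS : forall i, sg i \in S by move=> i; rewrite mem_undup map_f // mem_enum.
  have Srep : forall σ, σ \in S -> exists i, sg i = σ.
    by move=> σ; rewrite mem_undup => /mapP[i _ ->]; exists i.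
  have uS : uniq S := undup_uniq _.
  pose Y' := fun σ i => \sum_(w <- G σ) expect (ketbra (v i)) (vec_of (2 ^ s) w).
  have e1 : ((eps * N%:R)%:C)%C <= \sum_i Y' (sg i) i.
    have : \sum_(i < N) (eps%:C)%C <= \sum_i Y' (sg i) i.
      apply: ler_sum => i _; case: (hf i) => _ _ h _; rewrite /Y' /= -hG; exact: ltW.
    by rewrite sumr_const card_ord rmorphM rmorph_nat mulr_natr.
  have e2 : \sum_i Y' (sg i) i = \sum_(σ <- S) \sum_(i | sg i == σ) Y' σ i.
    rewrite (eq_bigr (fun σ => \sum_i (if sg i == σ then Y' σ i else 0))); last first.
      by move=> σ _; rewrite big_mkcond.
    rewrite exchange_big /=; apply: eq_bigr => i _.
    rewrite (bigD1_seq (sg i)) //= eqxx big1_seq ?addr0 //.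
    by move=> σ /andP[ne _]; rewrite eq_sym (negPf ne).
  have e3 : forall σ, σ \in S -> \sum_(i | sg i == σ) Y' σ i <= (#|` G σ|)%:R.
    move=> σ /Srep [i0 <-]; have [_ [_ hon] _ _] := hf i0; rewrite hG in hon.
    rewrite exchange_big /=.
    apply: (@le_trans _ _ (\sum_(w <- G (sg i0)) 1)).
      rewrite big_seq [X in _ <= X]big_seq; apply: ler_sum => w wG.
      under eq_bigr do rewrite expect_ketbra.
      have hb := @bessel R _ _ (fun i => sg i == sg i0) v (vec_of (2 ^ s) w) ov.
      by rewrite hon // eqxx in hb.
    by rewrite -sum1_size natr_sum.
  have e4 : \sum_(σ <- S) \sum_(i | sg i == σ) Y' σ i <=
            ((\sum_(σ <- S) (#|` G σ|)%:R : R)%:C)%C.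
    rewrite rmorph_sum big_seq [X in _ <= X]big_seq; apply: ler_sum => σ σS.
    by rewrite rmorph_nat; exact: e3.
  have e5 : \sum_(σ <- S) (#|` G σ|)%:R <= 2 `^ x.
    pose L := (\sum_(τ <- S) size τ)%N.
    have hL : forall σ, σ \in S -> (size σ <= L)%N.
      by move=> σ σS; rewrite /L (bigD1_seq σ) //= leq_addr.
    have bd : forall σ, σ \in S ->
        (#|` G σ|)%:R <= 2 `^ x / 2 ^+ L * (2 ^ (L - size σ))%:R.
      move=> σ σS; have [i0 hi0] := Srep σ σS; have [_ _ _ h4] := hf i0.
      rewrite hG in h4; have h := @card_bound R (size (sg i0)) _ x h4; rewrite hi0 in h.
      have eL : (2:R) ^+ L = 2 ^+ (L - size σ) * 2 ^+ size σ.
        by rewrite -exprD subnK // hL.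
      rewrite natrX eL invfM -mulrA mulrAC mulVf ?mulr1 ?expf_neq0 //.
      by rewrite mul1r ler_pdivlMr // exprn_gt0.
    apply: (@le_trans _ _ (\sum_(σ <- S) 2 `^ x / 2 ^+ L * (2 ^ (L - size σ))%:R)).
      by rewrite big_seq [X in _ <= X]big_seq; apply: ler_sum.
    rewrite -mulr_sumr -natr_sum.
    have k := @kraft L S uS (introT allP hL).
    have k' : (\sum_(s0 <- S) 2 ^ (L - size s0))%:R <= (2 ^ L)%:R :> R.
      rewrite ler_nat; apply: k => a b aS bS pab; apply: HU => //.
      + by have [i <-] := Srep a aS; case: (hf i) => -> _ _ _.
      + by have [i <-] := Srep b bS; case: (hf i) => -> _ _ _.
    apply: le_trans (ler_wpM2l _ k') _.
      by rewrite divr_ge0 // ?ltW ?powR_gt0 // exprn_ge0.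
    by rewrite natrX divfK // expf_neq0.
  have : ((eps * N%:R)%:C)%C <= ((2 `^ x)%:C)%C.
    rewrite e2 in e1; apply: le_trans e1 (le_trans e4 _); by rewrite lecR.
  by rewrite lecR.
have b0 : 0 < 2 `^ B by rewrite powR_gt0 // ltr0n.
rewrite ler_pdivlMl //; apply/ler_addgt0Pr => e e0.
pose t := e / 2 `^ B.
have t0 : 0 < t by rewrite divr_gt0.
have lt0 : 0 < log2 (1 + t).
  by apply: divr_gt0; apply: ln_gt0; [rewrite ltrDl | rewrite ltr1n].
have Bx : B < B + log2 (1 + t) by rewrite ltrDl.
have := main _ Bx.
rewrite powRD; last by apply/implyP => _; rewrite pnatr_eq0.
rewrite pow2_log2; last by rewrite addr_gt0.
by rewrite mulrDr mulr1 /t [2 `^ B * _]mulrC divfK // gt_eqF.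
Qed.
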